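(* Let $k$ be an even integer, let $f=\sum_{n\ge 1}a(n)q^n\in S_k$ be a normalized Hecke eigenform of level $1$, and let $\nu$ be a nonnegative integer. Then $$\frac{(k+2\nu-1)!}{(k+\nu-1)!}\,\mathcal{S}_1\big([\theta(\tau),f(4\tau)]_{\nu}\big)=[f(\tau),f(\tau)]_{2\nu},$$ where the first bracket is taken with $\theta$ of weight $\tfrac12$ and $f(4\tau)$ of weight $k$, and the second with both entries of weight $k$.
   Context: $q=e^{2\pi i\tau}$, $\tau\in\mathbb H$, and $S_k$ denotes the space of cusp forms of weight $k$ for $\mathrm{SL}_2(\mathbb Z)$. $\theta(\tau)=\sum_{n\in\mathbb Z}q^{n^2}$ is Jacobi's theta function. For holomorphic functions $f_1,f_2$ on $\mathbb H$ regarded as having weights $k_1,k_2$, and $\nu\in\mathbb Z_{\ge0}$, the Rankin–Cohen bracket is $$[f_1,f_2]_\nu=(2\pi i)^{-\nu}\sum_{i=0}^{\nu}(-1)^{\nu-i}\binom{\nu}{i}\frac{\Gamma(k_1+\nu)\Gamma(k_2+\nu)}{\Gamma(k_1+i)\Gamma(k_2+\nu-i)}f_1^{(i)}f_2^{(\nu-i)},$$ where $f^{(i)}$ denotes the $i$-th derivative with respect to $\tau$. For an integer $\lambda$, the first Shimura map $\mathcal S_1$ on forms of weight $\lambda+\tfrac12$ is given on $q$-expansions by $\sum_{n\ge1}c(n)q^n\mapsto\sum_{n\ge1}\Big(\sum_{d\mid n}d^{\lambda-1}c(n^2/d^2)\Big)q^n$; here it is applied with $\lambda=k+2\nu$ to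 $[\theta(\tau),f(4\tau)]_\nu$, which has weight $k+2\nu+\tfrac12$. *)

(* Defs.v *)
From Stdlib Require Import Reals ZArith List.
From Coquelicot Require Import Coquelicot.

Open Scope C_scope.

(** q-expansions (formal Fourier expansions in q = e^{2 pi i tau}):
    coefficient sequences c : nat -> C, f = sum_{n>=0} c n q^n. *)

(** q^n = e^{2 pi i n tau}, written with real exp/cos/sin. *)
Definition qpow (tau : C) (n : nat) : C :=
  RtoC (exp (- 2 * PI * INR n * Im tau)) *
  (cos (2 * PI * INR n * Re tau), sin (2 * PI * INR n * Re tau)).

(** a : nat -> C is the q-expansion of a cusp form of weight k for SL_2(Z):
    a 0 = 0 (vanishing at the cusp), the q-series converges on the upper
    half plane to a function F (holomorphic and 1-periodic automatically),
    and F(-1/tau) = tau^k F(tau). *)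
Definition is_cusp_form (k : nat) (a : nat -> C) : Prop :=
  a 0%nat = RtoC 0 /\
  exists F : C -> C,
    (forall tau, (0 < Im tau)%R -> is_series (fun n => a n * qpow tau n) (F tau)) /\
    (forall tau, (0 < Im tau)%R -> F (- / tau) = pow_n tau k * F tau).

(** Hecke operator T_n (n >= 1) of weight k on q-expansions:
    (T_n a)(m) = sum_{d | gcd(m,n)} d^(k-1) a(m n / d^2). *)
Definition hecke (k n : nat) (a : nat -> C) (m : nat) : C :=
  sum_n (fun j => let d := S j in
           if andb (Nat.eqb (m mod d) 0) (Nat.eqb (n mod d) 0)
           then pow_n (RtoC (INR d)) (k - 1) * a ((m * n) / (d * d))%nat
           else RtoC 0) (n - 1).

Definition is_hecke_eigenform (k : nat) (a : nat -> C) : Prop :=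
  forall n : nat, (1 <= n)%nat ->
    exists lam : C, forall m : nat, hecke k n a m = lam * a m.

(** Rising factorial x (x+1) ... (x+m-1) = Gamma(x+m)/Gamma(x). *)
Fixpoint rising (x : R) (m : nat) : R :=
  match m with
  | O => 1%R
  | S m' => (rising x m' * (x + INR m'))%R
  end.

(** Rankin-Cohen coefficient
    (-1)^(nu-i) binom(nu,i) Gamma(k1+nu)Gamma(k2+nu)/(Gamma(k1+i)Gamma(k2+nu-i)). *)
Definition rc_weight (k1 k2 : R) (nu i : nat) : R :=
  ((-1) ^ (nu - i) * Binomial.C nu i *
   rising (k1 + INR i) (nu - i) * rising (k2 + INR (nu - i)) i)%R.

(** Rankin-Cohen bracket on q-expansions: (2 pi i)^{-1} d/dtau acts on
    sum c(n) q^n as multiplication of c(n) by n, and products of q-series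
    are Cauchy products. *)
Definition rc_bracket (k1 k2 : R) (nu : nat) (c1 c2 : nat -> C) (n : nat) : C :=
  sum_n (fun i =>
     RtoC (rc_weight k1 k2 nu i) *
     sum_n (fun m => pow_n (RtoC (INR m)) i * c1 m *
                     (pow_n (RtoC (INR (n - m))) (nu - i) * c2 (n - m)%nat)) n) nu.

(** q-expansion of theta(tau) = sum_{m in Z} q^{m^2}:
    coefficient n = #{m in Z : m^2 = n} (such m satisfy |m| <= n). *)
Definition theta_coef (n : nat) : C :=
  RtoC (INR (length (filter (fun m : Z => Z.eqb (m * m) (Z.of_nat n))
                      (map (fun j => (Z.of_nat j - Z.of_nat n)%Z) (seq 0 (2 * n + 1)))))).

Definition dilate4 (a : nat -> C) (n : nat) : C :=
  if Nat.eqb (n mod 4) 0 then a (n / 4)%nat else RtoC 0.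

(** First Shimura map for weight lam + 1/2:
    sum_{n>=1} c(n) q^n |-> sum_{n>=1} (sum_{d|n} d^(lam-1) c(n^2/d^2)) q^n. *)
Definition shimura1 (lam : nat) (c : nat -> C) (n : nat) : C :=
  match n with
  | O => RtoC 0
  | S _ => sum_n (fun j => let d := S j in
             if Nat.eqb (n mod d) 0
             then pow_n (RtoC (INR d)) (lam - 1) * c ((n * n) / (d * d))%nat
             else RtoC 0) (n - 1)
  end.

(* Main.v *)
Require Import Defs.
From Stdlib Require Import Reals ZArith List.
From Coquelicot Require Import Coquelicot.
From Stdlib Require Import Lia Lra.
Open Scope C_scope.

Fixpoint SC (n : nat) (f : nat -> C) : C :=
  match n with O => 0 | S n' => SC n' f + f n' end.

Lemma sum_n_SC (f : nat -> C) n : sum_n f n = SC (S n) f.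
Proof.
  induction n. - rewrite sum_O. simpl. ring.
  - rewrite sum_Sn, IHn. reflexivity.
Qed.

Lemma SC_ext n (f g : nat -> C) : (forall i, (i < n)%nat -> f i = g i) -> SC n f = SC n g.
Proof.
  induction n; intros H; simpl; auto.
  rewrite IHn by (intros; apply H; lia). rewrite H by lia. auto.
Qed.

Lemma SC_plus n (f g : nat -> C) : SC n (fun i => f i + g i) = SC n f + SC n g.
Proof. induction n; simpl. ring. rewrite IHn. ring. Qed.

Lemma SC_scal n (c : C) (f : nat -> C) : SC n (fun i => c * f i) = c * SC n f.
Proof. induction n; simpl. ring. rewrite IHn. ring. Qed.

Lemma SC_zero n (f : nat -> C) : (forall i, (i < n)%nat -> f i = 0) -> SC n f = 0.
Proof. induction n; intros H; simpl; auto. rewrite IHn by (intros; apply H; lia).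
  rewrite H by lia. ring. Qed.

Lemma SC_split n m (f : nat -> C) : SC (n + m) f = SC n f + SC m (fun i => f (n + i)%nat).
Proof. induction m; simpl. rewrite Nat.add_0_r. ring.
  rewrite Nat.add_succ_r. simpl. rewrite IHm. ring. Qed.

Lemma SC_first n (f : nat -> C) : SC (S n) f = f O + SC n (fun i => f (S i)).
Proof. rewrite <- (Nat.add_1_l n) at 1. rewrite SC_split. simpl. ring. Qed.

Lemma SC_swap n m (f : nat -> nat -> C) :
  SC n (fun i => SC m (fun j => f i j)) = SC m (fun j => SC n (fun i => f i j)).
Proof.
  induction n; simpl. rewrite SC_zero; auto.
  rewrite IHn, <- SC_plus. reflexivity.
Qed.

Lemma SC_single n a (g : nat -> C) :
  SC n (fun i => if Nat.eqb i a then g i else 0) = if Nat.ltb a n then g a else 0.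
Proof.
  induction n. { simpl. destruct a; reflexivity. }
  simpl SC. rewrite IHn. cbv beta. destruct (Nat.eqb n a) eqn:E1.
  - apply Nat.eqb_eq in E1; subst a. replace (Nat.ltb n n) with false by (symmetry; apply Nat.ltb_ge; lia).
    replace (Nat.ltb n (S n)) with true by (symmetry; apply Nat.ltb_lt; lia). ring.
  - apply Nat.eqb_neq in E1. destruct (Nat.ltb_spec a n); destruct (Nat.ltb_spec a (S n)); try ring; lia.
Qed.

Lemma SC_shift o n J (f : nat -> C) : (o + n <= J)%nat ->
  SC n f = SC J (fun j => if andb (Nat.leb o j) (Nat.ltb j (o + n)) then f (j - o)%nat else 0).
Proof.
  intros H. replace J with (o + (n + (J - o - n)))%nat by lia.
  rewrite !SC_split.
  match goal with |- _ = SC o ?g + (SC n ?h + SC _ ?k) =>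
    assert (E1 : SC o g = 0); [apply SC_zero|];
    [|assert (E2 : SC (J - o - n) k = 0); [apply SC_zero|];
      [|assert (E3 : SC n h = SC n f); [apply SC_ext|]]] end.
  - intros i Hi. replace (Nat.leb o i) with false by (symmetry; apply Nat.leb_gt; lia). auto.
  - intros i Hi. replace (Nat.ltb (o + (n+i)) (o+n)) with false by (symmetry; apply Nat.ltb_ge; lia).
    rewrite Bool.andb_false_r. auto.
  - intros i Hi. replace (Nat.leb o (o+i)) with true by (symmetry; apply Nat.leb_le; lia).
    replace (Nat.ltb (o+i) (o+n)) with true by (symmetry; apply Nat.ltb_lt; lia).
    simpl. f_equal. lia.
  - rewrite E1, E2, E3. ring.
Qed.

Lemma SC_restrict n m (f : nat -> C) : (m <= n)%nat ->
  SC n (fun i => if Nat.ltb i m then f i else 0) = SC m f.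
Proof.
  intros H. replace n with (m + (n - m))%nat by lia. rewrite SC_split.
  rewrite (SC_zero (n - m)). rewrite Cplus_0_r. apply SC_ext. intros i Hi.
  replace (Nat.ltb i m) with true by (symmetry; apply Nat.ltb_lt; lia). auto.
  intros i Hi. replace (Nat.ltb (m+i) m) with false by (symmetry; apply Nat.ltb_ge; lia). auto.
Qed.

Lemma SC_reflect n (f : nat -> C) : SC n f = SC n (fun i => f (n - 1 - i)%nat).
Proof.
  induction n. auto.
  change (SC (S n) f) with (SC n f + f n). rewrite IHn, SC_first.
  rewrite Cplus_comm. f_equal. f_equal; lia. apply SC_ext. intros. f_equal. lia.
Qed.

Definition binR (n k : nat) : R :=
  if Nat.leb k n then Binomial.C n k else 0%R.

Lemma binR_pascal n c : binR (S n) (S c) = (binR n c + binR n (S c))%R.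
Proof.
  unfold binR. destruct (Nat.ltb_spec c n).
  - replace (Nat.leb (S c) (S n)) with true by (symmetry; apply Nat.leb_le; lia).
    replace (Nat.leb c n) with true by (symmetry; apply Nat.leb_le; lia).
    replace (Nat.leb (S c) n) with true by (symmetry; apply Nat.leb_le; lia).
    symmetry; apply pascal; auto.
  - destruct (Nat.eq_dec c n).
    + subst. replace (Nat.leb (S n) (S n)) with true by (symmetry; apply Nat.leb_le; lia).
      replace (Nat.leb n n) with true by (symmetry; apply Nat.leb_le; lia).
      replace (Nat.leb (S n) n) with false by (symmetry; apply Nat.leb_gt; lia).
      unfold Binomial.C. rewrite !Nat.sub_diag. change (fact 0) with 1%nat. simpl (INR 1). field. split; apply INR_fact_neq_0.
    + replace (Nat.leb (S c) (S n)) with false by (symmetry; apply Nat.leb_gt; lia).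
      replace (Nat.leb c n) with false by (symmetry; apply Nat.leb_gt; lia).
      replace (Nat.leb (S c) n) with false by (symmetry; apply Nat.leb_gt; lia). ring.
Qed.

Lemma binR_0 n : binR n 0 = 1%R.
Proof. unfold binR, Binomial.C. simpl. rewrite Nat.sub_0_r. field. apply INR_fact_neq_0. Qed.

Lemma binR_0_S c : binR 0 (S c) = 0%R.
Proof. reflexivity. Qed.

Lemma vandermonde a B c :
  SC (S c) (fun s => RtoC (binR a s * binR B (c - s))) = RtoC (binR (a + B) c).
Proof.
  revert c. induction a; intros c.
  - rewrite SC_first. rewrite SC_zero. rewrite binR_0, Nat.sub_0_r. simpl. rewrite Cplus_0_r.
    f_equal. ring.
    intros i Hi. rewrite binR_0_S. f_equal. ring.
  - destruct c as [|c].
    + simpl. rewrite !binR_0. rewrite Cplus_0_l. f_equal. ring.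
    + rewrite SC_first. 
      rewrite (SC_ext _ _ (fun s => RtoC (binR a s * binR B (c - s)) + RtoC (binR a (S s) * binR B (S c - S s)))).
      2:{ intros i Hi. rewrite binR_pascal, <- RtoC_plus. f_equal. simpl (S c - S i)%nat. ring. }
      rewrite SC_plus, IHa.
      replace (S a + B)%nat with (S (a + B)) by lia. rewrite binR_pascal, RtoC_plus.
      rewrite <- (IHa (S c)), (SC_first (S c)). rewrite !binR_0.
      replace (S c - 0)%nat with (S c) by lia. ring.
Qed.

Lemma rising_fact c b : (1 <= c)%nat ->
  rising (INR c) b = (INR (fact (c + b - 1)) / INR (fact (c - 1)))%R.
Proof.
  intros Hc. induction b.
  - simpl. replace (c + 0 - 1)%nat with (c - 1)%nat by lia. field. apply INR_fact_neq_0.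
  - simpl rising. rewrite IHb. replace (c + S b - 1)%nat with (S (c + b - 1)) by lia.
    rewrite fact_simpl, mult_INR. replace (S (c + b - 1)) with (c + b)%nat by lia.
    rewrite plus_INR. field. apply INR_fact_neq_0.
Qed.

Lemma rising_half i s :
  (rising (1/2 + INR i) s * 4^s * INR (fact (2*i)) * INR (fact (i+s))
   = INR (fact (2*(i+s))) * INR (fact i))%R.
Proof.
  induction s.
  - rewrite !Nat.add_0_r. unfold rising. rewrite pow_O. ring.
  - replace (2 * (i + S s))%nat with (S (S (2 * (i+s)))) by lia.
    replace (i + S s)%nat with (S (i + s)) by lia.
    rewrite !fact_simpl, !mult_INR. simpl rising. simpl pow.
    replace (INR (S (S (2 * (i + s))))) with (2 * (INR i + INR s) + 2)%R
      by (rewrite !S_INR, mult_INR, plus_INR; simpl; ring).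
    replace (INR (S (2 * (i + s)))) with (2 * (INR i + INR s) + 1)%R
      by (rewrite !S_INR, mult_INR, plus_INR; simpl; ring).
    replace (INR (S (i + s))) with (INR i + INR s + 1)%R by (rewrite S_INR, plus_INR; ring).
    transitivity ((rising (1 / 2 + INR i) s * 4 ^ s * INR (fact (2 * i)) * INR (fact (i + s)))
                   * (2 * (2 * (INR i + INR s) + 1) * (INR i + INR s + 1)))%R.
    + field.
    + rewrite IHs. ring.
Qed.

Definition Ck (k nu : nat) : R := (INR (fact (k + 2 * nu - 1)) / INR (fact (k + nu - 1)))%R.
Definition pw (k nu i : nat) : R := rc_weight (1/2) (INR k) nu i.
Definition qw (k nu j : nat) : R := rc_weight (INR k) (INR k) (2 * nu) j.

Ltac facnz := repeat split; try apply INR_fact_neq_0.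

Lemma p_formula k nu s : (1 <= k)%nat -> (s <= nu)%nat ->
  (pw k nu (nu - s) * 4^s = (-1)^s * INR (fact (2*nu)) / (INR (fact s) * INR (fact (2*nu-2*s)))
     * INR (fact (k+nu-1)) / INR (fact (k+s-1)))%R.
Proof.
  intros Hk Hs. unfold pw, rc_weight.
  replace (nu - (nu - s))%nat with s by lia.
  rewrite <- plus_INR, rising_fact by lia.
  replace (k + s + (nu - s) - 1)%nat with (k + nu - 1)%nat by lia.
  replace (k + s - 1)%nat with (k + s - 1)%nat by lia.
  pose proof (rising_half (nu - s) s) as H.
  replace (nu - s + s)%nat with nu in H by lia.
  replace (2 * (nu - s))%nat with (2 * nu - 2 * s)%nat in H by lia.
  unfold Binomial.C. replace (nu - (nu - s))%nat with s by lia.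
  assert (E : ((rising (1 / 2 + INR (nu - s)) s * 4 ^ s) =
     INR (fact (2 * nu)) * INR (fact (nu - s)) / (INR (fact (2 * nu - 2 * s)) * INR (fact nu)))%R).
  { rewrite <- H. field. facnz. }
  transitivity ((-1) ^ s * (INR (fact nu) / (INR (fact (nu - s)) * INR (fact s))) *
     (rising (1 / 2 + INR (nu - s)) s * 4 ^ s) * (INR (fact (k + nu - 1)) / INR (fact (k + s - 1))))%R.
  ring. rewrite E. field. facnz.
Qed.

Lemma q_formula k nu j : (1 <= k)%nat -> (j <= 2*nu)%nat ->
  qw k nu j = ((-1)^(2*nu-j) * INR (fact (2*nu)) / (INR (fact j) * INR (fact (2*nu-j)))
     * (INR (fact (k+2*nu-1)) / INR (fact (k+j-1)))
     * (INR (fact (k+2*nu-1)) / INR (fact (k+2*nu-j-1))))%R.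
Proof.
  intros Hk Hj. unfold qw, rc_weight, Binomial.C.
  rewrite <- !plus_INR, !rising_fact by lia.
  replace (k + j + (2 * nu - j) - 1)%nat with (k + 2*nu - 1)%nat by lia.
  replace (k + (2 * nu - j) + j - 1)%nat with (k + 2*nu - 1)%nat by lia.
  replace (k + j - 1)%nat with (k + j - 1)%nat by lia.
  replace (k + (2 * nu - j) - 1)%nat with (k + 2*nu - j - 1)%nat by lia.
  field. facnz.
Qed.

Definition K0 (k nu j : nat) : R :=
  ((-1)^(2*nu-j) * INR (fact (2*nu)) * INR (fact (k+2*nu-1)) / (INR (fact j) * INR (fact (k+2*nu-j-1))))%R.

Lemma coef_term k nu j s : (1 <= k)%nat -> (s <= j)%nat -> (s <= 2*nu - j)%nat -> (j <= 2*nu)%nat ->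
  (Ck k nu * (pw k nu (nu - s) * 4^s * binR (2*nu-2*s) (j-s) * (-1)^(2*nu-s-j))
   = K0 k nu j * (binR j s * binR (k+2*nu-j-1) (2*nu-j-s)))%R.
Proof.
  intros Hk H1 H2 H3.
  replace (pw k nu (nu - s) * 4 ^ s * binR (2 * nu - 2 * s) (j - s) * (-1) ^ (2 * nu - s - j))%R
   with ((pw k nu (nu - s) * 4 ^ s) * binR (2 * nu - 2 * s) (j - s) * (-1) ^ (2 * nu - s - j))%R by ring.
  rewrite p_formula by lia.
  unfold binR, Binomial.C, Ck, K0.
  replace (Nat.leb (j - s) (2 * nu - 2 * s)) with true by (symmetry; apply Nat.leb_le; lia).
  replace (Nat.leb s j) with true by (symmetry; apply Nat.leb_le; lia).
  replace (Nat.leb (2 * nu - j - s) (k + 2 * nu - j - 1)) with true by (symmetry; apply Nat.leb_le; lia).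
  replace (2 * nu - 2 * s - (j - s))%nat with (2 * nu - j - s)%nat by lia.
  replace (k + 2 * nu - j - 1 - (2 * nu - j - s))%nat with (k + s - 1)%nat by lia.
  replace (2 * nu - s - j)%nat with (2 * nu - j - s)%nat by lia.
  assert (Es : ((-1) ^ (2 * nu - j) = (-1)^s * (-1)^(2*nu-j-s))%R).
  { rewrite <- pow_add. f_equal. lia. }
  rewrite Es. field. facnz.
Qed.

Lemma coef_final k nu j : (1 <= k)%nat -> (j <= 2*nu)%nat ->
  (K0 k nu j * binR (k + 2*nu - 1) (2*nu - j) = qw k nu j)%R.
Proof.
  intros Hk Hj. rewrite q_formula by lia. unfold K0, binR, Binomial.C.
  replace (Nat.leb (2 * nu - j) (k + 2 * nu - 1)) with true by (symmetry; apply Nat.leb_le; lia).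
  replace (k + 2 * nu - 1 - (2 * nu - j))%nat with (k + j - 1)%nat by lia.
  field. facnz.
Qed.

Lemma RtoC_sum (f : nat -> R) n : RtoC (sum_f_R0 f n) = SC (S n) (fun i => RtoC (f i)).
Proof. induction n. simpl. ring. simpl sum_f_R0. rewrite RtoC_plus, IHn. reflexivity. Qed.

Lemma SC_scal_r n (f : nat -> C) (c : C) : SC n (fun i => f i * c) = SC n f * c.
Proof. induction n; simpl. ring. rewrite IHn. ring. Qed.

Definition pcond (nu i j : nat) : bool :=
  andb (Nat.leb (nu - i) j) (Nat.ltb j (nu - i + S (2 * i))).
Definition pcf (k nu i j : nat) : R :=
  (Ck k nu * (pw k nu i * 4^(nu-i) * binR (2*i) (j-(nu-i)) * (-1)^(2*i - (j - (nu-i)))))%R.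

Lemma stepA k nu (u v : R) i : (i <= nu)%nat ->
  RtoC (Ck k nu) * RtoC (pw k nu i * ((u - v)^2)^i * (4*u*v)^(nu-i))
  = SC (S (2*nu)) (fun j => (if pcond nu i j then RtoC (pcf k nu i j) else 0) * RtoC (u^j * v^(2*nu-j))).
Proof.
  intros Hi.
  assert (EX : (((u - v)^2)^i = (u + - v)^(2*i))%R).
  { rewrite <- pow_mult. f_equal. }
  rewrite EX, binomial, <- RtoC_mult.
  replace (Ck k nu * (pw k nu i * sum_f_R0 (fun i0 : nat => Binomial.C (2 * i) i0 * u ^ i0 * (- v) ^ (2 * i - i0)) (2 * i) *
      (4 * u * v) ^ (nu - i)))%R with
     ((Ck k nu * pw k nu i * (4 * u * v) ^ (nu - i)) * sum_f_R0 (fun i0 : nat => Binomial.C (2 * i) i0 * u ^ i0 * (- v) ^ (2 * i - i0)) (2 * i))%R by ring.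
  rewrite RtoC_mult, RtoC_sum, <- SC_scal.
  rewrite (SC_shift (nu - i) (S (2*i)) (S (2*nu))) by lia.
  apply SC_ext. intros j Hj. unfold pcond.
  destruct (Nat.leb_spec (nu - i) j); destruct (Nat.ltb_spec j (nu - i + S (2 * i))); simpl;
    try (rewrite Cmult_0_l; reflexivity).
  set (l := (j - (nu - i))%nat).
  assert (Eu : (u ^ j = u ^ l * u^(nu - i))%R) by (rewrite <- pow_add; f_equal; unfold l; lia).
  assert (Ev : (v ^ (2*nu - j) = v ^ (2*i - l) * v^(nu - i))%R) by (rewrite <- pow_add; f_equal; unfold l; lia).
  assert (Emv : ((- v) ^ (2 * i - l) = (-1)^(2*i - l) * v ^ (2*i - l))%R)
    by (rewrite <- Rpow_mult_distr; f_equal; ring).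
  assert (E4 : ((4 * u * v) ^ (nu - i) = 4^(nu-i) * u^(nu-i) * v^(nu-i))%R)
    by (rewrite !Rpow_mult_distr; ring).
  assert (Eb : Binomial.C (2 * i) l = binR (2*i) l).
  { unfold binR. replace (Nat.leb l (2*i)) with true by (symmetry; apply Nat.leb_le; unfold l; lia). auto. }
  rewrite <- RtoC_mult, <- RtoC_mult. f_equal.
  unfold pcf. fold l. change (i + (i + 0))%nat with (2*i)%nat. change (nu + (nu + 0))%nat with (2*nu)%nat. rewrite Eu, Ev, Emv, E4, Eb. ring.
Qed.

Lemma stepC k nu j : (1 <= k)%nat -> (j <= 2*nu)%nat ->
  SC (S nu) (fun i => if pcond nu i j then RtoC (pcf k nu i j) else 0) = RtoC (qw k nu j).
Proof.
  intros Hk Hj.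
  set (c := (2*nu - j)%nat). set (B := (k + 2*nu - j - 1)%nat). set (m := S (Nat.min j c)).
  rewrite SC_reflect.
  rewrite (SC_ext _ _ (fun s => if Nat.ltb s m then RtoC (K0 k nu j * (binR j s * binR B (c - s))) else 0)).
  2:{ intros s Hs. replace (S nu - 1 - s)%nat with (nu - s)%nat by lia. unfold pcond.
      destruct (Nat.leb_spec (nu - (nu - s)) j); destruct (Nat.ltb_spec j (nu - (nu - s) + S (2 * (nu - s))));
      destruct (Nat.ltb_spec s m); cbv beta iota delta [andb]; try (unfold m, c in *; lia); auto.
      f_equal. unfold pcf. rewrite <- coef_term by (unfold m, c in *; lia).
      replace (nu - (nu - s))%nat with s by lia.
      replace (2 * (nu - s))%nat with (2 * nu - 2 * s)%nat by lia.
      replace (2 * nu - 2 * s - (j - s))%nat with (2 * nu - s - j)%nat by lia. reflexivity. }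
  rewrite SC_restrict by (unfold m; lia).
  rewrite <- coef_final by lia.
  replace (k + 2 * nu - 1)%nat with (j + B)%nat by (unfold B; lia).
  rewrite RtoC_mult, <- vandermonde, <- SC_scal.
  rewrite <- (SC_restrict (S c) m) by (unfold m; lia).
  apply SC_ext. intros s Hs. destruct (Nat.ltb_spec s m). rewrite RtoC_mult. auto.
  unfold binR at 1. replace (Nat.leb s j) with false by (symmetry; apply Nat.leb_gt; unfold m in *; lia).
  rewrite Rmult_0_l, <- RtoC_mult. f_equal. ring.
Qed.

Lemma poly_id k nu (u v : R) : (1 <= k)%nat ->
  RtoC (Ck k nu) * SC (S nu) (fun i => RtoC (pw k nu i * ((u - v)^2)^i * (4*u*v)^(nu-i)))
  = SC (S (2*nu)) (fun j => RtoC (qw k nu j * u^j * v^(2*nu-j))).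
Proof.
  intros Hk. rewrite <- SC_scal.
  rewrite (SC_ext _ _ (fun i => SC (S (2*nu)) (fun j => (if pcond nu i j then RtoC (pcf k nu i j) else 0) * RtoC (u^j * v^(2*nu-j))))).
  2:{ intros i Hi. apply stepA. lia. }
  rewrite SC_swap. apply SC_ext. intros j Hj.
  rewrite SC_scal_r, stepC by lia. rewrite <- RtoC_mult. f_equal. ring.
Qed.

Lemma length_filter_map {A B} (p : B -> bool) (g : A -> B) l :
  length (filter p (map g l)) = length (filter (fun x => p (g x)) l).
Proof. induction l; simpl; auto. destruct (p (g a)); simpl; auto. Qed.

Lemma length_filter_false {A} (p : A -> bool) l :
  (forall x, In x l -> p x = false) -> length (filter p l) = 0%nat.
Proof. induction l; simpl; intros H; auto. rewrite H by auto. apply IHl. intros; apply H; auto. Qed.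

Lemma cnt_two (p : nat -> bool) a b n : a <> b -> (forall i, p i = orb (Nat.eqb i a) (Nat.eqb i b)) ->
  length (filter p (seq 0 n)) = ((if Nat.ltb a n then 1 else 0) + (if Nat.ltb b n then 1 else 0))%nat.
Proof.
  intros Hab Hp. induction n.
  - simpl. destruct a; destruct b; reflexivity.
  - rewrite seq_S, filter_app, length_app, IHn. simpl. rewrite Hp.
    destruct (Nat.eqb_spec n a); destruct (Nat.eqb_spec n b);
    destruct (Nat.ltb_spec a n); destruct (Nat.ltb_spec a (S n));
    destruct (Nat.ltb_spec b n); destruct (Nat.ltb_spec b (S n)); simpl; lia.
Qed.

Lemma theta_0 : theta_coef 0 = 1.
Proof. unfold theta_coef. simpl. reflexivity. Qed.

Lemma theta_nsq j : (forall s, (s * s)%nat <> j) -> theta_coef j = 0.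
Proof.
  intros H. unfold theta_coef. rewrite length_filter_false. reflexivity.
  intros x Hx. apply in_map_iff in Hx. destruct Hx as [i [Hi _]]. subst x.
  destruct (Z.eqb_spec ((Z.of_nat i - Z.of_nat j) * (Z.of_nat i - Z.of_nat j)) (Z.of_nat j)) as [E|E]; auto.
  exfalso. apply (H (Z.abs_nat (Z.of_nat i - Z.of_nat j))).
  apply Nat2Z.inj. rewrite Nat2Z.inj_mul, Nat2Z.inj_abs_nat. 
  rewrite <- Z.abs_mul. rewrite Z.abs_eq by nia. exact E.
Qed.

Lemma theta_sq s : (1 <= s)%nat -> theta_coef (s * s) = 2.
Proof.
  intros Hs. unfold theta_coef. rewrite length_filter_map.
  rewrite (cnt_two _ (s * s - s) (s * s + s)).
  - replace (Nat.ltb (s * s - s) (2 * (s * s) + 1)) with true by (symmetry; apply Nat.ltb_lt; nia).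
    replace (Nat.ltb (s * s + s) (2 * (s * s) + 1)) with true by (symmetry; apply Nat.ltb_lt; nia).
    simpl. replace (1+1)%R with 2%R by lra. reflexivity.
  - nia.
  - intros i. destruct (Nat.eqb_spec i (s*s - s)); destruct (Nat.eqb_spec i (s*s + s)); simpl;
    apply Z.eqb_eq || apply Z.eqb_neq.
    + lia.
    + subst i. rewrite Nat2Z.inj_sub by nia. rewrite Nat2Z.inj_mul. ring.
    + subst i. rewrite Nat2Z.inj_add, Nat2Z.inj_mul. ring.
    + intros E. rewrite Nat2Z.inj_mul in E.
      assert (E2 : ((Z.of_nat i - Z.of_nat s * Z.of_nat s - Z.of_nat s) * (Z.of_nat i - Z.of_nat s * Z.of_nat s + Z.of_nat s) = 0)%Z) by lia.
      apply Z.mul_eq_0 in E2. destruct E2; lia.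
Qed.

Lemma sum_squares N (F : nat -> C) : (forall j, (forall s, (s * s)%nat <> j) -> F j = 0) ->
  SC (S (N * N)) F = SC (S N) (fun s => F (s * s)%nat).
Proof.
  intros HF. induction N.
  - reflexivity.
  - replace (S (S N * S N)) with (S (N * N) + (2 * N + 1))%nat by lia.
    rewrite SC_split, IHN. change (SC (S (S N)) (fun s => F (s * s)%nat)) with
      (SC (S N) (fun s => F (s * s)%nat) + F (S N * S N)%nat).
    f_equal. replace (2 * N + 1)%nat with (S (2 * N)) by lia. simpl SC.
    rewrite SC_zero. rewrite Cplus_0_l. f_equal. lia.
    intros i Hi. apply HF. intros s Hs.
    destruct (Nat.le_gt_cases s N). nia. nia.
Qed.

Definition adiff (a b : nat) : nat := if Nat.leb b a then (a - b)%nat else (b - a)%nat.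

Lemma parity_sum_aux N : forall (f : nat -> C),
  (forall s, (s <= N)%nat -> Nat.even s <> Nat.even N -> f s = 0) ->
  SC (S N) (fun s => theta_coef (s * s) * f s) = SC (S N) (fun m => f (adiff N (2 * m))).
Proof.
  induction N as [N IH] using lt_wf_ind. intros f Hf.
  destruct N as [|[|N]].
  - simpl. rewrite theta_0. unfold adiff. simpl. ring.
  - simpl SC. rewrite theta_0. rewrite (theta_sq 1 (le_n 1): theta_coef 1 = 2).
    rewrite (Hf 0%nat) by (simpl; lia || discriminate). unfold adiff. simpl.
    replace (RtoC 2) with (1 + 1) by (rewrite <- RtoC_plus; f_equal; lra). ring.
  - change (SC (S (S (S N))) (fun s => theta_coef (s * s) * f s)) with
      (SC (S N) (fun s => theta_coef (s * s) * f s) + theta_coef (S N * S N) * f (S N)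
        + theta_coef (S (S N) * S (S N)) * f (S (S N))).
    rewrite (IH N) by (lia || (intros s Hs He; apply Hf; [lia | simpl; auto])).
    assert (Hz : f (S N) = 0).
    { apply Hf. lia. rewrite Nat.even_succ_succ, Nat.even_succ. rewrite <- Nat.negb_even.
      destruct (Nat.even N); discriminate. }
    rewrite Hz. rewrite (theta_sq (S (S N))) by lia.
    rewrite (SC_first (S (S N)) (fun m => f (adiff (S (S N)) (2*m)))). change (SC (S (S N)) (fun i => f (adiff (S (S N)) (2 * S i))))
      with (SC (S N) (fun i => f (adiff (S (S N)) (2 * S i))) + f (adiff (S (S N)) (2 * S (S N)))).
    rewrite (SC_ext (S N) (fun i => f (adiff (S (S N)) (2 * S i))) (fun m => f (adiff N (2 * m)))).
    2:{ intros i Hi. f_equal. unfold adiff.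
        destruct (Nat.leb_spec (2 * S i) (S (S N))); destruct (Nat.leb_spec (2 * i) N); lia. }
    replace (adiff (S (S N)) (2 * 0)) with (S (S N)) by (unfold adiff; simpl; lia).
    replace (adiff (S (S N)) (2 * S (S N))) with (S (S N))
      by (unfold adiff; destruct (Nat.leb_spec (2 * S (S N)) (S (S N))); lia).
    replace (RtoC 2) with (1 + 1) by (rewrite <- RtoC_plus; f_equal; lra). ring.
Qed.

Lemma pow_n_RtoC (x : R) n : pow_n (RtoC x) n = RtoC (x ^ n).
Proof. induction n. reflexivity. simpl pow_n. rewrite IHn. simpl pow. rewrite RtoC_mult. reflexivity. Qed.

Definition Gv k nu (u v : R) : C :=
  SC (S nu) (fun i => RtoC (pw k nu i * ((u - v)^2)^i * (4*u*v)^(nu-i))).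

Lemma parity_mod4 N s : (s <= N)%nat -> Nat.even s <> Nat.even N -> ((N*N - s*s) mod 4 <> 0)%nat.
Proof.
  intros Hs Hp Hm.
  pose proof (Nat.div_mod (N*N - s*s) 4 ltac:(lia)) as Hd. rewrite Hm in Hd.
  set (q := ((N * N - s * s) / 4)%nat) in *.
  destruct (Nat.even s) eqn:Es; destruct (Nat.even N) eqn:EN; try congruence.
  - apply Nat.even_spec in Es. assert (Nat.odd N = true) by (rewrite <- Nat.negb_even, EN; auto).
    apply Nat.odd_spec in H. destruct Es as [y Hy]. destruct H as [x Hx]. subst. nia.
  - apply Nat.even_spec in EN. assert (Nat.odd s = true) by (rewrite <- Nat.negb_even, Es; auto).
    apply Nat.odd_spec in H. destruct EN as [y Hy]. destruct H as [x Hx]. subst. nia.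
Qed.

Lemma dilate4_mul4 (a : nat -> C) x : dilate4 a (4 * x) = a x.
Proof.
  unfold dilate4. rewrite (Nat.mul_comm 4 x), Nat.Div0.mod_mul. rewrite Nat.eqb_refl.
  rewrite Nat.div_mul by lia. reflexivity.
Qed.

Lemma theta_bracket k nu (a : nat -> C) N :
  rc_bracket (1/2) (INR k) nu theta_coef (dilate4 a) (N*N)
  = SC (S N) (fun m => Gv k nu (INR m) (INR (N - m)) * a (m * (N - m))%nat).
Proof.
  unfold rc_bracket. rewrite sum_n_SC.
  set (H := fun j => SC (S nu) (fun i => RtoC (pw k nu i) * (pow_n (RtoC (INR j)) i *
              (pow_n (RtoC (INR (N*N - j))) (nu - i) * dilate4 a (N*N - j)%nat)))).
  rewrite (SC_ext _ _ (fun i => SC (S (N*N)) (fun j => RtoC (pw k nu i) * (pow_n (RtoC (INR j)) i * theta_coef j * (pow_n (RtoC (INR (N*N - j))) (nu - i) * dilate4 a (N*N - j)%nat))))).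
  2:{ intros i _. rewrite sum_n_SC, <- SC_scal. reflexivity. }
  rewrite SC_swap.
  rewrite (SC_ext _ _ (fun j => theta_coef j * H j)).
  2:{ intros j _. unfold H. rewrite <- SC_scal. apply SC_ext. intros; ring. }
  rewrite sum_squares.
  2:{ intros j Hj. rewrite theta_nsq by auto. ring. }
  rewrite (parity_sum_aux N (fun s => H (s * s)%nat)).
  2:{ intros s Hs Hp. unfold H. apply SC_zero. intros i _. unfold dilate4.
      destruct (Nat.eqb_spec ((N * N - s * s) mod 4) 0).
      - exfalso. apply (parity_mod4 N s); auto.
      - ring. }
  apply SC_ext. intros m Hm.
  set (t := adiff N (2 * m)).
  assert (E1 : (N * N - t * t = 4 * (m * (N - m)))%nat).
  { unfold t, adiff. destruct (Nat.leb_spec (2 * m) N).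
    - assert (N = 2 * m + (N - 2*m))%nat by lia. set (r := (N - 2*m)%nat) in *.
      replace (N - m)%nat with (m + r)%nat by lia. rewrite H1 at 1 2. nia.
    - assert (2 * m = N + (2*m - N))%nat by lia. set (r := (2*m - N)%nat) in *.
      assert (m <= N)%nat by lia.
      assert (N = m + (N - m))%nat by lia. set (w := (N - m)%nat) in *.
      replace r with (m - w)%nat by lia. rewrite H3 at 1 2. 
      assert (w <= m)%nat by lia. nia. }
  assert (E2 : (INR (t * t) = (INR m - INR (N - m))^2)%R).
  { rewrite mult_INR. unfold t, adiff. rewrite minus_INR by lia.
    destruct (Nat.leb_spec (2 * m) N); rewrite minus_INR by lia; rewrite mult_INR; simpl; ring. }
  assert (E3 : (INR (N * N - t * t) = 4 * INR m * INR (N - m))%R).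
  { rewrite E1, !mult_INR. simpl. ring. }
  unfold H. rewrite E1, dilate4_mul4. unfold Gv. rewrite <- SC_scal_r.
  apply SC_ext. intros i _. rewrite <- E1, E3, E2, !pow_n_RtoC, !RtoC_mult. ring.
Qed.

Definition Qv k nu (u v : R) : C :=
  SC (S (2*nu)) (fun j => RtoC (qw k nu j * u^j * v^(2*nu-j))).

Lemma Qv_hom k nu (d u v : R) : RtoC (d^(2*nu)) * Qv k nu u v = Qv k nu (d*u) (d*v).
Proof.
  unfold Qv. rewrite <- SC_scal. apply SC_ext. intros j Hj. rewrite <- RtoC_mult. f_equal.
  rewrite !Rpow_mult_distr. replace (2 * nu)%nat with (j + (2*nu - j))%nat at 1 by lia.
  rewrite pow_add. ring.
Qed.

Lemma rhs_expand k nu (a : nat -> C) n :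
  rc_bracket (INR k) (INR k) (2*nu) a a n = SC (S n) (fun m => Qv k nu (INR m) (INR (n - m)) * (a m * a (n - m)%nat)).
Proof.
  unfold rc_bracket. rewrite sum_n_SC.
  rewrite (SC_ext _ _ (fun i => SC (S n) (fun m => RtoC (qw k nu i) * (pow_n (RtoC (INR m)) i * a m *
                      (pow_n (RtoC (INR (n - m))) (2 * nu - i) * a (n - m)%nat))))).
  2:{ intros i _. rewrite sum_n_SC, <- SC_scal. reflexivity. }
  rewrite SC_swap. apply SC_ext. intros m _. unfold Qv. rewrite <- SC_scal_r.
  apply SC_ext. intros i _. rewrite !pow_n_RtoC, !RtoC_mult. ring.
Qed.

Lemma hecke_at1 k n (a : nat -> C) : (1 <= n)%nat -> hecke k n a 1 = a n.
Proof.
  intros Hn. unfold hecke. rewrite sum_n_SC. replace (S (n - 1)) with (S (n - 1)) by lia.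
  rewrite SC_first. rewrite SC_zero.
  - simpl (S 0). rewrite Nat.mod_1_r, Nat.mod_1_r. simpl Nat.eqb. cbv beta iota.
    rewrite Nat.mul_1_l, Nat.mul_1_r, Nat.div_1_r. rewrite pow_n_RtoC. simpl INR. rewrite pow1. simpl andb. cbv beta iota. ring.
  - intros i _. rewrite Nat.mod_small by lia. simpl Nat.eqb. reflexivity.
Qed.

Lemma hecke_mult k (a : nat -> C) : is_hecke_eigenform k a -> a 1%nat = 1 ->
  forall n m, (1 <= n)%nat -> hecke k n a m = a n * a m.
Proof.
  intros He H1 n m Hn. destruct (He n Hn) as [lam Hl].
  pose proof (Hl 1%nat) as E. rewrite hecke_at1 in E by auto. rewrite H1, Cmult_1_r in E.
  rewrite Hl, E. reflexivity.
Qed.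

Lemma hecke_pair k (a : nat -> C) n m : is_hecke_eigenform k a -> a 1%nat = 1 -> a 0%nat = 0 ->
  (1 <= n)%nat -> (m <= n)%nat ->
  a m * a (n - m)%nat = SC n (fun j => if andb (Nat.eqb (m mod S j) 0) (Nat.eqb (n mod S j) 0)
      then RtoC (INR (S j) ^ (k-1)) * a (m * (n - m) / (S j * S j))%nat else 0).
Proof.
  intros He H1 H0 Hn Hm.
  destruct (Nat.eq_dec m 0) as [->|Hm0].
  - rewrite H0, Cmult_0_l. symmetry. apply SC_zero. intros i _. simpl (0 * _)%nat.
    rewrite Nat.Div0.div_0_l, H0. destruct (_ && _)%bool; ring.
  - rewrite <- hecke_mult with (k := k) by (auto; lia). unfold hecke. rewrite sum_n_SC.
    replace (S (m - 1)) with m by lia.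
    set (G := fun j : nat => if ((m mod S j =? 0) && (n mod S j =? 0))%bool then RtoC (INR (S j) ^ (k - 1))%R * a (m * (n - m) / (S j * S j))%nat else 0). replace (SC n G) with (SC (m + (n - m)) G) by (f_equal; lia). unfold G. rewrite SC_split.
    rewrite (SC_zero (n - m)). rewrite Cplus_0_r.
    + apply SC_ext. intros j Hj. cbv zeta.
      assert (Hd : S j <> 0%nat) by lia.
      destruct (Nat.eqb_spec ((n - m) mod S j) 0) as [E1|E1];
      destruct (Nat.eqb_spec (m mod S j) 0) as [E2|E2];
      destruct (Nat.eqb_spec (n mod S j) 0) as [E3|E3]; cbv beta iota delta [andb]; auto.
      * rewrite pow_n_RtoC, Nat.mul_comm. reflexivity.
      * exfalso. apply E3. apply Nat.mod_divide in E1; auto. apply Nat.mod_divide in E2; auto.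
        apply Nat.mod_divide; auto. replace n with (m + (n - m))%nat by lia. apply Nat.divide_add_r; auto.
      * exfalso. apply E1. apply Nat.mod_divide in E3; auto. apply Nat.mod_divide in E2; auto.
        apply Nat.mod_divide; auto. apply Nat.divide_sub_r; auto.
    + intros i Hi. rewrite (Nat.mod_small m) by lia.
      replace (Nat.eqb m 0) with false by (symmetry; apply Nat.eqb_neq; auto).
      reflexivity.
Qed.

Lemma SC_mult_reindex d N (g : nat -> C) : (1 <= d)%nat ->
  SC (S (d * N)) (fun m => if Nat.eqb (m mod d) 0 then g m else 0) = SC (S N) (fun i => g (d * i)%nat).
Proof.
  intros Hd. induction N.
  - rewrite Nat.mul_0_r. simpl. rewrite Nat.Div0.mod_0_l. simpl. rewrite Nat.mul_0_r. reflexivity.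
  - replace (S (d * S N)) with (S (d * N) + S (d - 1))%nat by lia.
    rewrite SC_split, IHN. change (SC (S (S N)) (fun i => g (d * i)%nat)) with
      (SC (S N) (fun i => g (d * i)%nat) + g (d * S N)%nat). f_equal.
    simpl SC. rewrite SC_zero. rewrite Cplus_0_l.
    + replace (S (d * N + (d - 1)))%nat with (S N * d)%nat by lia.
      rewrite Nat.Div0.mod_mul, Nat.eqb_refl. f_equal. lia.
    + intros i Hi. replace (S (d * N + i))%nat with (S i + N * d)%nat by lia.
      rewrite Nat.Div0.mod_add, Nat.mod_small by lia. reflexivity.
Qed.

Lemma lhs_expand k nu (a : nat -> C) n : (1 <= k)%nat -> (1 <= n)%nat ->
  RtoC (Ck k nu) * shimura1 (k + 2*nu) (rc_bracket (1/2) (INR k) nu theta_coef (dilate4 a)) n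
  = SC n (fun j => if Nat.eqb (n mod S j) 0 then RtoC (INR (S j) ^ (k-1)) *
        SC (S (n / S j)) (fun i => Qv k nu (INR (S j * i)) (INR (n - S j * i)) * a (i * (n / S j - i))%nat) else 0).
Proof.
  intros Hk Hn. destruct n as [|n']; [lia|]. unfold shimura1. rewrite sum_n_SC.
  replace (S (S n' - 1)) with (S n') by lia. rewrite <- SC_scal. apply SC_ext.
  intros j Hj. cbv zeta. set (n := S n') in *. set (d := S j).
  destruct (Nat.eqb_spec (n mod d) 0) as [E|E]; [|ring].
  apply Nat.Div0.div_exact in E. set (N := (n / d)%nat) in *.
  assert (EN : (n * n / (d * d) = N * N)%nat).
  { rewrite E. replace (d * N * (d * N))%nat with (N * N * (d * d))%nat by ring.
    apply Nat.div_mul. unfold d; lia. }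
  rewrite EN, theta_bracket, pow_n_RtoC.
  replace (k + 2 * nu - 1)%nat with ((k - 1) + 2 * nu)%nat by lia. rewrite pow_add.
  rewrite RtoC_mult. rewrite <- !SC_scal.
  transitivity (RtoC (INR d ^ (k - 1)) * SC (S N) (fun i => RtoC (INR d ^ (2 * nu)) * (RtoC (Ck k nu) * Gv k nu (INR i) (INR (N - i))) * a (i * (N - i))%nat)).
  { rewrite <- SC_scal. apply SC_ext. intros. ring. }
  rewrite <- SC_scal. apply SC_ext. intros i Hi. f_equal. f_equal.
  unfold Gv. rewrite poly_id by auto. fold (Qv k nu (INR i) (INR (N - i))). rewrite Qv_hom.
  f_equal. rewrite mult_INR. auto.
  rewrite E. rewrite <- Nat.mul_sub_distr_l, mult_INR. auto.
Qed.

Theorem main_pos (k nu : nat) (a : nat -> C) :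
  (1 <= k)%nat -> a 0%nat = 0 ->
  is_hecke_eigenform k a ->
  a 1%nat = 1 ->
  forall n : nat,
    RtoC (INR (fact (k + 2 * nu - 1)) / INR (fact (k + nu - 1)))
      * shimura1 (k + 2 * nu) (rc_bracket (1 / 2) (INR k) nu theta_coef (dilate4 a)) n
    = rc_bracket (INR k) (INR k) (2 * nu) a a n.
Proof.
  intros Hk H0 He H1 n. fold (Ck k nu). rewrite rhs_expand.
  destruct (Nat.eq_dec n 0) as [->|Hn].
  { simpl shimura1. simpl SC. rewrite H0. ring. }
  rewrite lhs_expand by lia.
  rewrite (SC_ext (S n) _ (fun m => SC n (fun j => Qv k nu (INR m) (INR (n - m)) *
     (if andb (Nat.eqb (m mod S j) 0) (Nat.eqb (n mod S j) 0)
      then RtoC (INR (S j) ^ (k-1)) * a (m * (n - m) / (S j * S j))%nat else 0)))).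
  2:{ intros m Hm. rewrite (hecke_pair k a n m) by (auto; lia). rewrite <- SC_scal. reflexivity. }
  rewrite SC_swap. apply SC_ext. intros j Hj. set (d := S j).
  destruct (Nat.eqb_spec (n mod d) 0) as [E|E].
  2:{ symmetry. apply SC_zero. intros i _. rewrite Bool.andb_false_r. ring. }
  pose proof E as E0. apply Nat.Div0.div_exact in E. set (N := (n / d)%nat) in *.
  rewrite (SC_ext (S n) _ (fun m => RtoC (INR d ^ (k-1)) * (if Nat.eqb (m mod d) 0 then
        Qv k nu (INR m) (INR (n - m)) * a (m * (n - m) / (d * d))%nat else 0))).
  2:{ intros m _. rewrite Bool.andb_true_r. destruct (Nat.eqb (m mod d) 0); ring. }
  rewrite SC_scal. f_equal.
  rewrite E at 1. rewrite SC_mult_reindex by (unfold d; lia).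
  apply SC_ext. intros i Hi. f_equal. f_equal.
  rewrite E, <- Nat.mul_sub_distr_l.
  replace (d * i * (d * (N - i)))%nat with (i * (N - i) * (d * d))%nat by ring.
  symmetry. apply Nat.div_mul. unfold d; lia.
Qed.


Definition E (t : R) : C := (cos (2 * PI * t), sin (2 * PI * t)).
Definition rho (y : R) : R := exp (- 2 * PI * y).

Lemma E_add s t : E s * E t = E (s + t).
Proof.
  unfold E. replace (2 * PI * (s + t))%R with (2 * PI * s + 2 * PI * t)%R by ring.
  rewrite cos_plus, sin_plus. unfold Cmult. simpl. f_equal; ring.
Qed.

Lemma E_0 : E 0 = 1.
Proof. unfold E. rewrite Rmult_0_r, cos_0, sin_0. reflexivity. Qed.

Lemma E_nat (k : nat) : E (INR k) = 1.
Proof.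
  unfold E. replace (2 * PI * INR k)%R with (0 + 2 * INR k * PI)%R by ring.
  rewrite cos_period, sin_period, cos_0, sin_0. reflexivity.
Qed.

Lemma E_int (z : Z) : E (IZR z) = 1.
Proof.
  destruct (Z_le_gt_dec 0 z).
  - rewrite <- (Z2Nat.id z) by lia. rewrite <- INR_IZR_INZ. apply E_nat.
  - replace (IZR z) with (- INR (Z.to_nat (- z)))%R.
    + unfold E. replace (2 * PI * - INR (Z.to_nat (- z)))%R with (- (2 * PI * INR (Z.to_nat (-z))))%R by ring.
      rewrite cos_neg, sin_neg. pose proof (E_nat (Z.to_nat (-z))) as H. unfold E in H.
      injection H as H1 H2. rewrite H1, H2. unfold RtoC. f_equal. ring.
    + rewrite INR_IZR_INZ, Z2Nat.id by lia. rewrite opp_IZR. ring.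
Qed.

Lemma E_shift t (z : Z) : E (t + IZR z) = E t.
Proof. rewrite <- E_add, E_int. apply Cmult_1_r. Qed.

Lemma Cmod_E t : Cmod (E t) = 1%R.
Proof.
  unfold E, Cmod. simpl fst. simpl snd. rewrite <- sqrt_1. f_equal.
  rewrite <- (sin2_cos2 (2 * PI * t)). unfold Rsqr. ring.
Qed.

Lemma rho_pos y : (0 < rho y)%R.
Proof. apply exp_pos. Qed.

Lemma exp_nat (x : R) (m : nat) : exp (INR m * x) = ((exp x) ^ m)%R.
Proof.
  induction m. simpl. rewrite Rmult_0_l. apply exp_0.
  rewrite S_INR. replace ((INR m + 1) * x)%R with (INR m * x + x)%R by ring.
  rewrite exp_plus, IHm. simpl. ring.
Qed.

Lemma qpow_E tau m : qpow tau m = RtoC (rho (Im tau) ^ m) * E (INR m * Re tau).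
Proof.
  unfold qpow, rho, E. rewrite <- exp_nat.
  replace (- 2 * PI * INR m * Im tau)%R with (INR m * (- 2 * PI * Im tau))%R by ring.
  replace (2 * PI * INR m * Re tau)%R with (2 * PI * (INR m * Re tau))%R by ring. reflexivity.
Qed.

Lemma Cmod_qpow tau m : Cmod (qpow tau m) = (rho (Im tau) ^ m)%R.
Proof.
  rewrite qpow_E, Cmod_mult, Cmod_E, Cmod_R, Rabs_pos_eq. ring.
  apply pow_le. left. apply rho_pos.
Qed.

Lemma rho_lt1 y : (0 < y)%R -> (rho y < 1)%R.
Proof. intros. unfold rho. rewrite <- exp_0. apply exp_increasing. pose proof PI_RGT_0. nra. Qed.

Lemma rho_mono y1 y2 : (y1 <= y2)%R -> (rho y2 <= rho y1)%R.
Proof. intros. unfold rho. destruct (Req_dec y1 y2). subst; lra. left. apply exp_increasing. pose proof PI_RGT_0. nra. Qed.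

Lemma rho_add y1 y2 : rho (y1 + y2) = (rho y1 * rho y2)%R.
Proof. unfold rho. rewrite <- exp_plus. f_equal. ring. Qed.

Lemma rho_half_small : (rho (1/2) < 1/2)%R.
Proof.
  unfold rho. replace (-2 * PI * (1/2))%R with (- PI)%R by field.
  rewrite exp_Ropp. pose proof (exp_ineq1_le PI). pose proof PI2_1.
  apply (Rmult_lt_reg_r (exp PI)). apply exp_pos. rewrite Rinv_l. lra.
  pose proof (exp_pos PI). lra.
Qed.

Lemma is_series_finite (f : nat -> C) N : (forall m, (N <= m)%nat -> f m = 0) -> is_series f (SC N f).
Proof.
  intros H. unfold is_series. apply filterlim_ext_loc with (f := fun _ => SC N f).
  - exists N. intros M HM. rewrite sum_n_SC. replace (S M) with (N + (S M - N))%nat by lia.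
    rewrite SC_split. rewrite (SC_zero (S M - N)). symmetry. apply Cplus_0_r. intros i _. apply H. lia.
  - apply filterlim_const.
Qed.

Lemma norm_series_le (u : nat -> C) (v : nat -> R) l L :
  is_series u l -> is_series v L -> (forall m, Cmod (u m) <= v m)%R -> (Cmod l <= L)%R.
Proof.
  intros Hu Hv Hle.
  assert (H1 : is_lim_seq (fun M => Cmod (sum_n u M)) (Cmod l)).
  { unfold is_lim_seq. simpl. change (Cmod l) with (@norm C_AbsRing C_NormedModule l).
    apply filterlim_ext with (f := fun M => norm (sum_n u M)).
    - intros x. reflexivity.
    - eapply filterlim_comp. apply Hu. apply filterlim_norm. }
  assert (H2 : is_lim_seq (sum_n v) L) by exact Hv.
  assert (H3 : forall M, (Cmod (sum_n u M) <= sum_n v M)%R).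
  { intros M. change (Cmod (sum_n u M)) with (@norm C_AbsRing C_NormedModule (sum_n u M)).
    unfold sum_n. eapply Rle_trans. apply (@norm_sum_n_m C_AbsRing C_NormedModule).
    apply sum_n_m_le. intros. apply Hle. }
  pose proof (is_lim_seq_le _ _ _ _ H3 H1 H2). simpl in H. exact H.
Qed.

Lemma series_terms_bounded (u : nat -> C) l : is_series u l -> exists B, forall m, (Cmod (u m) <= B)%R.
Proof.
  intros Hu. destruct (filterlim_bounded (sum_n u)) as [M HM]. exists l. exact Hu.
  change (forall n, Cmod (sum_n u n) <= M)%R in HM.
  exists (2 * M)%R. intros m. assert (0 <= M)%R by (eapply Rle_trans; [apply Cmod_ge_0|apply (HM O)]).
  destruct m.
  - replace (u 0%nat) with (sum_n u 0) by (rewrite sum_O; auto).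
    specialize (HM O). lra.
  - replace (u (S m)) with (sum_n u (S m) - sum_n u m).
    + eapply Rle_trans. unfold Cminus. apply Cmod_triangle. rewrite Cmod_opp.
      pose proof (HM (S m)). pose proof (HM m). lra.
    + rewrite sum_Sn. simpl. change plus with Cplus. ring.
Qed.

Definition Hyp (a : nat -> C) (F : C -> C) : Prop :=
  (forall tau, (0 < Im tau)%R -> is_series (fun n => a n * qpow tau n) (F tau)) /\
  (forall tau, (0 < Im tau)%R -> F (- / tau) = F tau).

Lemma series_unique (u : nat -> C) l1 l2 : is_series u l1 -> is_series u l2 -> l1 = l2.
Proof. intros H1 H2. exact (filterlim_locally_unique (F := eventually) (sum_n u) l1 l2 H1 H2). Qed.

Lemma abs_conv a F y : Hyp a F -> (0 < y)%R -> ex_series (fun m => Cmod (a m) * rho y ^ m)%R.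
Proof.
  intros [HS _] Hy.
  destruct (series_terms_bounded _ _ (HS (0, y/2)%R ltac:(simpl; lra))) as [B HB].
  apply (@ex_series_le R_AbsRing R_CompleteNormedModule) with (b := fun m => (B * rho (y/2) ^ m)%R).
  - intros m. change (norm (Cmod (a m) * rho y ^ m)%R) with (Rabs (Cmod (a m) * rho y ^ m)%R).
    rewrite Rabs_pos_eq.
    2:{ apply Rmult_le_pos. apply Cmod_ge_0. apply pow_le. left; apply rho_pos. }
    specialize (HB m). rewrite Cmod_mult, Cmod_qpow in HB. simpl (Im _) in HB.
    replace y with (y/2 + y/2)%R at 1 by field. rewrite rho_add, Rpow_mult_distr.
    rewrite <- Rmult_assoc. apply Rmult_le_compat_r. apply pow_le. left; apply rho_pos. exact HB.
  - apply ex_series_ext with (a := fun m => scal B (rho (y/2) ^ m)%R).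
    intros; reflexivity. apply (@ex_series_scal_l R_AbsRing R_NormedModule). apply ex_series_geom.
    rewrite Rabs_pos_eq. apply rho_lt1; lra. left; apply rho_pos.
Qed.

Definition Aval (a : nat -> C) : R := Series (fun m => Cmod (a m) * rho (1/2) ^ m)%R.

Lemma bound_high a F tau : Hyp a F -> (1/2 <= Im tau)%R -> (Cmod (F tau) <= Aval a)%R.
Proof.
  intros HH Ht. pose proof HH as [HS _].
  apply (norm_series_le (fun n => a n * qpow tau n) (fun m => Cmod (a m) * rho (1/2) ^ m)%R).
  - apply HS. lra.
  - apply Series_correct. apply (abs_conv a F); auto; lra.
  - intros m. rewrite Cmod_mult, Cmod_qpow. apply Rmult_le_compat_l. apply Cmod_ge_0.
    apply pow_incr. split. left; apply rho_pos. apply rho_mono. auto.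
Qed.

Lemma qpow_shift tau (z : Z) m : qpow (tau + RtoC (IZR z)) m = qpow tau m.
Proof.
  rewrite !qpow_E. f_equal.
  - f_equal. f_equal. f_equal. destruct tau; simpl. ring.
  - destruct tau as [x0 y0]. simpl. replace (INR m * (x0 + IZR z))%R with (INR m * x0 + IZR (Z.of_nat m * z))%R.
    apply E_shift. rewrite mult_IZR, <- INR_IZR_INZ. ring.
Qed.

Lemma periodic a F tau (z : Z) : Hyp a F -> (0 < Im tau)%R -> F (tau + RtoC (IZR z)) = F tau.
Proof.
  intros [HS _] Ht. apply (series_unique (fun n => a n * qpow tau n)).
  - apply is_series_ext with (a := fun n => a n * qpow (tau + RtoC (IZR z)) n).
    intros; rewrite qpow_shift; auto. apply HS. replace (Im (tau + RtoC (IZR z))) with (Im tau) by (destruct tau; simpl; ring). auto.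
  - apply HS; auto.
Qed.

Lemma reduce a F : Hyp a F -> forall p tau, (0 < Im tau)%R -> (1/2 <= Im tau * 2^p)%R -> (Cmod (F tau) <= Aval a)%R.
Proof.
  intros HH. pose proof HH as [HS HM]. induction p; intros tau Hy Hp.
  - apply (bound_high a F); auto. simpl in Hp. lra.
  - destruct (Rle_lt_dec (1/2) (Im tau)) as [Hh|Hl]. apply (bound_high a F); auto.
    destruct tau as [x y]. simpl in Hy, Hp, Hl.
    destruct (archimed (x + 1/2)) as [Ha1 Ha2].
    set (z := (up (x + 1/2) - 1)%Z).
    assert (Ez : IZR z = (IZR (up (x + 1/2)) - 1)%R) by (unfold z; rewrite minus_IZR; auto).
    set (x1 := (x - IZR z)%R).
    assert (Hx1 : (-1/2 <= x1 <= 1/2)%R) by (unfold x1; lra).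
    assert (E1 : F (x, y) = F (x1, y)).
    { rewrite <- (periodic a F (x, y) (- z)) by (auto; simpl; lra). f_equal.
      unfold x1. rewrite opp_IZR. unfold Cplus, RtoC. simpl. f_equal; ring. }
    rewrite E1. rewrite <- HM by (simpl; lra).
    assert (D : (0 < x1^2 + y^2)%R) by nra.
    assert (Eim : Im (- / (x1, y)) = (y / (x1^2 + y^2))%R).
    { simpl. field. lra. }
    apply IHp. rewrite Eim. apply Rdiv_lt_0_compat; lra.
    rewrite Eim. simpl pow in Hp.
    assert (H2 : (2 * y <= y / (x1 ^ 2 + y ^ 2))%R).
    { apply (Rmult_le_reg_r (x1^2 + y^2)); auto.
      replace (y / (x1 ^ 2 + y ^ 2) * (x1 ^ 2 + y ^ 2))%R with y by (field; lra).
      assert (x1 ^ 2 <= 1/4)%R by nra. assert (y ^ 2 <= 1/4)%R by nra.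
      assert (x1 ^ 2 + y ^ 2 <= 1/2)%R by lra. nra. }
    assert (0 < 2^p)%R by (apply pow_lt; lra). nra.
Qed.

Lemma pow2_ge (p : nat) : (INR p <= 2^p)%R.
Proof. induction p. simpl; lra. rewrite S_INR. simpl. assert (1 <= 2^p)%R by (apply pow_R1_Rle; lra). lra. Qed.

Lemma bound_all a F tau : Hyp a F -> (0 < Im tau)%R -> (Cmod (F tau) <= Aval a)%R.
Proof.
  intros HH Hy. destruct (archimed (1 / (2 * Im tau))) as [H1 _].
  apply (reduce a F HH (Z.to_nat (up (1 / (2 * Im tau))))); auto.
  pose proof (pow2_ge (Z.to_nat (up (1 / (2 * Im tau))))).
  assert (0 <= up (1 / (2 * Im tau)))%Z.
  { apply le_IZR. assert (0 < 1 / (2 * Im tau))%R by (apply Rdiv_lt_0_compat; lra). lra. }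
  rewrite INR_IZR_INZ, Z2Nat.id in H by auto.
  assert (1 / (2 * Im tau) * (2 * Im tau) = 1)%R by (field; lra).
  nra.
Qed.

Lemma SC_const N (c : C) : SC N (fun _ => c) = RtoC (INR N) * c.
Proof. induction N. simpl. ring. simpl SC. rewrite IHN, S_INR, RtoC_plus. ring. Qed.

Lemma SC_telescope N (g : nat -> C) : SC N (fun j => g (S j) - g j) = g N - g O.
Proof. induction N. simpl. ring. simpl SC. rewrite IHN. ring. Qed.

Lemma SC_norm_le N (f : nat -> C) K : (forall j, (j < N)%nat -> Cmod (f j) <= K)%R ->
  (Cmod (SC N f) <= INR N * K)%R.
Proof.
  induction N; intros H. simpl. rewrite Cmod_0. lra.
  simpl SC. eapply Rle_trans. apply Cmod_triangle. rewrite S_INR.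
  pose proof (IHN ltac:(intros; apply H; lia)). pose proof (H N ltac:(lia)). lra.
Qed.

Lemma E_ne_1 t : (0 < t < 1)%R -> E t <> 1.
Proof.
  intros Ht Heq. unfold E in Heq. injection Heq as Hc Hs.
  pose proof PI_RGT_0.
  destruct (Rtotal_order (2 * PI * t) PI) as [H1|[H1|H1]].
  - assert (0 < sin (2 * PI * t))%R by (apply sin_gt_0; nra). lra.
  - rewrite H1, cos_PI in Hc. lra.
  - assert (sin (2 * PI * t) < 0)%R by (apply sin_lt_0; nra). lra.
Qed.

Lemma geom_E N (r : Z) : (0 < N)%nat ->
  SC N (fun j => E (IZR r * INR j / INR N)) = if Z.eqb (r mod Z.of_nat N) 0 then RtoC (INR N) else 0.
Proof.
  intros HN. set (Nz := Z.of_nat N). set (q := (r / Nz)%Z). set (r0 := (r mod Nz)%Z).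
  assert (Hr : r = (Nz * q + r0)%Z) by (apply Z.div_mod; lia).
  assert (Hb : (0 <= r0 < Nz)%Z) by (apply Z.mod_pos_bound; lia).
  assert (HNR : INR N <> 0%R) by (apply not_0_INR; lia).
  assert (HNz : IZR Nz = INR N) by (unfold Nz; rewrite INR_IZR_INZ; auto).
  rewrite (SC_ext _ _ (fun j => E (IZR r0 * INR j / INR N))).
  2:{ intros j _. replace (IZR r * INR j / INR N)%R with (IZR r0 * INR j / INR N + IZR (q * Z.of_nat j))%R.
      apply E_shift. rewrite Hr, plus_IZR, !mult_IZR, HNz, <- INR_IZR_INZ. field. auto. }
  destruct (Z.eqb_spec r0 0) as [E0|E0].
  - rewrite (SC_ext _ _ (fun _ => 1)). rewrite SC_const. ring.
    intros j _. rewrite E0. replace (IZR 0 * INR j / INR N)%R with 0%R by (simpl; field; auto). apply E_0.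
  - set (g := fun j => E (IZR r0 * INR j / INR N)). set (w := E (IZR r0 / INR N)).
    assert (Hg : forall j, g (S j) - g j = g j * (w - 1)).
    { intros j. unfold g, w.
      replace (E (IZR r0 * INR j / INR N) * (E (IZR r0 / INR N) - 1)) with
        (E (IZR r0 * INR j / INR N) * E (IZR r0 / INR N) - E (IZR r0 * INR j / INR N)) by ring.
      rewrite E_add, S_INR.
      replace (IZR r0 * (INR j + 1) / INR N)%R with (IZR r0 * INR j / INR N + IZR r0 / INR N)%R by (field; auto).
      reflexivity. }
    assert (Ht : SC N (fun j => g (S j) - g j) = 0).
    { rewrite SC_telescope. unfold g. replace (IZR r0 * INR N / INR N)%R with (IZR r0) by (field; auto).
      rewrite E_int. replace (IZR r0 * INR 0 / INR N)%R with 0%R by (simpl; field; auto). rewrite E_0. ring. }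
    rewrite (SC_ext _ _ (fun j => g j * (w - 1))) in Ht by (intros; apply Hg).
    rewrite SC_scal_r in Ht.
    assert (Hw : w - 1 <> 0).
    { intros H. apply (E_ne_1 (IZR r0 / INR N)).
      - assert (1 <= IZR r0)%R by (apply IZR_le; lia). assert (IZR r0 < INR N)%R by (rewrite <- HNz; apply IZR_lt; lia).
        assert (0 < INR N)%R by (apply lt_0_INR; lia).
        split. apply Rdiv_lt_0_compat; lra. apply (Rmult_lt_reg_r (INR N)); auto.
        replace (IZR r0 / INR N * INR N)%R with (IZR r0) by (field; auto). lra.
      - fold w. rewrite <- (Cplus_0_l 1). rewrite <- H. ring. }
    replace (Z.eqb r0 0) with false by (symmetry; apply Z.eqb_neq; auto).
    fold g. rewrite <- (Cmult_1_r (SC N g)). rewrite <- (Cinv_r (w - 1)) by auto.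
    rewrite Cmult_assoc, Ht. ring.
Qed.

Lemma is_series_SC N (u : nat -> nat -> C) (l : nat -> C) :
  (forall j, (j < N)%nat -> is_series (u j) (l j)) ->
  is_series (fun m => SC N (fun j => u j m)) (SC N l).
Proof.
  induction N; intros H.
  - apply (is_series_finite (fun m => SC 0 (fun j => u j m)) 0). intros; reflexivity.
  - pose proof (is_series_plus _ _ _ _ (IHN ltac:(intros; apply H; lia)) (H N ltac:(lia))) as Hp.
    exact Hp.
Qed.

Lemma zmod_small_eq m n N : (m < N)%nat -> (n < N)%nat ->
  ((Z.of_nat m - Z.of_nat n) mod Z.of_nat N = 0)%Z -> m = n.
Proof.
  intros Hm Hn H. apply Z.mod_divide in H; [|lia]. destruct H as [k Hk].
  destruct (Z.lt_trichotomy k 0) as [Hk0|[Hk0|Hk0]]; [nia| subst; lia | nia].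
Qed.

Definition ftail (a : nat -> C) (N : nat) (y : R) (m : nat) : R :=
  if Nat.leb N m then (Cmod (a m) * rho y ^ m)%R else 0%R.

Lemma ex_tail a F N y : Hyp a F -> (0 < y)%R -> ex_series (ftail a N y).
Proof.
  intros HH Hy. apply (@ex_series_le R_AbsRing R_CompleteNormedModule) with (b := fun m => (Cmod (a m) * rho y ^ m)%R).
  - intros m. change (norm (ftail a N y m)) with (Rabs (ftail a N y m)). unfold ftail.
    assert (0 <= Cmod (a m) * rho y ^ m)%R by (apply Rmult_le_pos; [apply Cmod_ge_0|apply pow_le; left; apply rho_pos]).
    destruct (Nat.leb N m). rewrite Rabs_pos_eq; lra. rewrite Rabs_R0. auto.
  - apply (abs_conv a F); auto.
Qed.

Lemma fourier a F n N y : Hyp a F -> (n < N)%nat -> (0 < y)%R ->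
  (Cmod (a n) * rho y ^ n <= Aval a + Series (ftail a N y))%R.
Proof.
  intros HH HnN Hy. pose proof HH as [HS HM].
  assert (HN : (0 < N)%nat) by lia.
  assert (HNR : (0 < INR N)%R) by (apply lt_0_INR; lia).
  set (tj := fun j : nat => (INR j / INR N, y)%R : C).
  set (G := SC N (fun j => E (- (INR n * (INR j / INR N))) * F (tj j))).
  set (c := fun m => a m * RtoC (rho y ^ m) *
        (if Z.eqb ((Z.of_nat m - Z.of_nat n) mod Z.of_nat N) 0 then RtoC (INR N) else 0)).
  assert (Hc : is_series c G).
  { apply is_series_ext with (a := fun m => SC N (fun j => E (- (INR n * (INR j / INR N))) * (a m * qpow (tj j) m))).
    - intros m. unfold c. rewrite <- geom_E by auto. rewrite <- SC_scal. apply SC_ext. intros j _.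
      rewrite qpow_E. unfold tj. simpl Im. simpl Re.
      replace (IZR (Z.of_nat m - Z.of_nat n) * INR j / INR N)%R with
        (- (INR n * (INR j / INR N)) + INR m * (INR j / INR N))%R.
      + rewrite <- E_add. ring.
      + rewrite minus_IZR, <- !INR_IZR_INZ. field. lra.
    - apply is_series_SC. intros j _.
      apply is_series_ext with (a := fun m => scal (E (- (INR n * (INR j / INR N)))) (a m * qpow (tj j) m)).
      intros; reflexivity.
      apply (@is_series_scal_l C_AbsRing C_NormedModule (E (- (INR n * (INR j / INR N)))) (fun m => a m * qpow (tj j) m) (F (tj j))). apply HS. unfold tj. simpl. auto. }
  set (d := fun m => if Nat.eqb m n then c m else 0).
  assert (Hd : is_series d (c n)).
  { replace (c n) with (SC (S n) d). apply is_series_finite.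
    intros m Hm. unfold d. replace (Nat.eqb m n) with false by (symmetry; apply Nat.eqb_neq; lia). auto.
    unfold d. rewrite SC_single. replace (Nat.ltb n (S n)) with true by (symmetry; apply Nat.ltb_lt; lia). auto. }
  assert (Hcn : c n = a n * RtoC (rho y ^ n) * RtoC (INR N)).
  { unfold c. rewrite Z.sub_diag, Zmod_0_l. simpl. auto. }
  pose proof (is_series_minus _ _ _ _ Hc Hd) as Hcd.
  assert (Hex := ex_tail a F N y HH Hy).
  assert (Hv : is_series (fun m => (INR N * ftail a N y m)%R) (INR N * Series (ftail a N y))%R).
  { apply is_series_ext with (a := fun m => scal (INR N) (ftail a N y m)). intros; reflexivity.
    apply (@is_series_scal_l R_AbsRing R_NormedModule). apply Series_correct; auto. }
  assert (H1 : (Cmod (G - c n) <= INR N * Series (ftail a N y))%R).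
  { apply (norm_series_le _ _ _ _ Hcd Hv). intros m. change plus with Cplus. change opp with Copp.
    assert (Ht0 : (0 <= ftail a N y m)%R).
    { unfold ftail. destruct (Nat.leb N m). apply Rmult_le_pos. apply Cmod_ge_0. apply pow_le; left; apply rho_pos. lra. }
    unfold d. destruct (Nat.eqb_spec m n).
    - subst. replace (c n + - c n) with (RtoC 0) by ring. rewrite Cmod_0. nra.
    - replace (c m + - 0) with (c m) by ring. unfold c.
      destruct (Z.eqb_spec ((Z.of_nat m - Z.of_nat n) mod Z.of_nat N) 0) as [Ez|Ez].
      + destruct (Nat.leb_spec N m).
        * unfold ftail. replace (Nat.leb N m) with true by (symmetry; apply Nat.leb_le; lia).
          rewrite !Cmod_mult, !Cmod_R, !Rabs_pos_eq. lra. lra. apply pow_le; left; apply rho_pos.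
        * exfalso. apply n0. apply (zmod_small_eq m n N); auto.
      + rewrite Cmult_0_r, Cmod_0. nra. }
  assert (H2 : (Cmod G <= INR N * Aval a)%R).
  { apply SC_norm_le. intros j _. rewrite Cmod_mult, Cmod_E, Rmult_1_l. apply (bound_all a F); auto.
    }
  assert (H3 : (Cmod (c n) <= Cmod G + Cmod (G - c n))%R).
  { replace (c n) with (G + - (G - c n)) at 1 by ring. eapply Rle_trans. apply Cmod_triangle.
    rewrite Cmod_opp. lra. }
  rewrite Hcn, !Cmod_mult, !Cmod_R, !Rabs_pos_eq in H3 by (lra || (apply pow_le; left; apply rho_pos)).
  rewrite Hcn in H1. apply (Rmult_le_reg_r (INR N)); auto. lra.
Qed.

Lemma tail_small a F y : Hyp a F -> (0 < y)%R -> forall eps, (0 < eps)%R ->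
  exists N0, forall N, (N0 <= N)%nat -> (Series (ftail a N y) <= eps)%R.
Proof.
  intros HH Hy eps He.
  set (b := fun m => (Cmod (a m) * rho y ^ m)%R).
  assert (Hb : ex_series b) by (apply (abs_conv a F); auto).
  pose proof (Series_correct _ Hb) as Hs.
  assert (Hl : is_lim_seq (sum_n b) (Series b)) by exact Hs.
  apply is_lim_seq_spec in Hl. destruct (Hl (mkposreal eps He)) as [M0 HM0]. simpl in HM0.
  exists (S M0). intros N HN.
  rewrite (Series_incr_n (ftail a N y) N) by (lia || apply (ex_tail a F); auto).
  rewrite sum_eq_R0.
  2:{ intros m Hm. unfold ftail. replace (Nat.leb N m) with false by (symmetry; apply Nat.leb_gt; lia). auto. }
  rewrite (Series_ext _ (fun k => b (N + k)%nat)).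
  2:{ intros k. unfold ftail, b. replace (Nat.leb N (N + k)) with true by (symmetry; apply Nat.leb_le; lia). auto. }
  pose proof (Series_incr_n b N ltac:(lia) Hb) as E.
  specialize (HM0 (pred N) ltac:(lia)). rewrite sum_n_Reals in HM0.
  assert (Series (fun k => b (N + k)%nat) = Series b - sum_f_R0 b (pred N))%R by lra.
  rewrite H. apply Rabs_lt_between in HM0. lra.
Qed.

Lemma coef_bound_y a F n y : Hyp a F -> (0 < y)%R -> (Cmod (a n) * rho y ^ n <= Aval a)%R.
Proof.
  intros HH Hy. destruct (Rle_lt_dec (Cmod (a n) * rho y ^ n) (Aval a)) as [H|H]; auto.
  exfalso. set (eps := ((Cmod (a n) * rho y ^ n - Aval a) / 2)%R).
  destruct (tail_small a F y HH Hy eps ltac:(unfold eps; lra)) as [N0 HN0].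
  pose proof (fourier a F n (Nat.max N0 (S n)) y HH ltac:(lia) Hy).
  pose proof (HN0 (Nat.max N0 (S n)) ltac:(lia)). unfold eps in *. lra.
Qed.

Lemma coef_bound a F n : Hyp a F -> (Cmod (a n) <= Aval a)%R.
Proof.
  intros HH. set (c := Cmod (a n)). set (A := Aval a).
  assert (HA : (0 <= A)%R).
  { pose proof (coef_bound_y a F n 1 HH ltac:(lra)). fold c A in H.
    assert (0 <= c * rho 1 ^ n)%R by (apply Rmult_le_pos; [apply Cmod_ge_0|apply pow_le; left; apply rho_pos]). lra. }
  destruct (Rle_lt_dec c A) as [H|H]; auto. exfalso.
  assert (Hc : (0 < c)%R) by lra.
  pose proof PI_RGT_0 as HPI.
  assert (Hn : (0 <= INR n)%R) by apply pos_INR.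
  set (y := ((c - A) / (c * 4 * PI * (INR n + 1)))%R).
  assert (Hy : (0 < y)%R).
  { unfold y. apply Rdiv_lt_0_compat. lra. apply Rmult_lt_0_compat. nra. lra. }
  pose proof (coef_bound_y a F n y HH Hy) as H1. fold c A in H1.
  assert (Hr : (1 - 2 * PI * INR n * y <= rho y ^ n)%R).
  { unfold rho. rewrite <- exp_nat. pose proof (exp_ineq1_le (INR n * (-2 * PI * y))). lra. }
  assert (E : (c * (2 * PI * INR n * y) = (c - A) * INR n / (2 * (INR n + 1)))%R).
  { unfold y. field. split; lra. }
  assert (Hf : ((c - A) * INR n / (2 * (INR n + 1)) <= (c - A) / 2)%R).
  { apply (Rmult_le_reg_r (2 * (INR n + 1))). lra.
    replace ((c - A) * INR n / (2 * (INR n + 1)) * (2 * (INR n + 1)))%R with ((c - A) * INR n)%R by (field; lra).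
    replace ((c - A) / 2 * (2 * (INR n + 1)))%R with ((c - A) * (INR n + 1))%R by field. nra. }
  assert (c * (1 - 2 * PI * INR n * y) <= c * rho y ^ n)%R by (apply Rmult_le_compat_l; lra).
  nra.
Qed.

Lemma cusp_hyp_false a F : Hyp a F -> a 0%nat = 0 -> a 1%nat = 1 -> False.
Proof.
  intros HH H0 H1.
  set (r := rho (1/2)). set (A := Aval a).
  assert (Hr0 : (0 < r)%R) by apply rho_pos.
  assert (Hr1 : (r < 1/2)%R) by apply rho_half_small.
  assert (Hb : ex_series (fun m => Cmod (a m) * r ^ m)%R) by (apply (abs_conv a F); auto; lra).
  assert (HA : A = (Series (fun k => Cmod (a (S k)) * r ^ (S k)))%R).
  { unfold A, Aval. fold r. rewrite Series_incr_1 by auto. rewrite H0, Cmod_0. ring. }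
  assert (Hg : is_series (fun k => (A * r * r ^ k)%R) (A * r * / (1 - r))%R).
  { apply is_series_ext with (a := fun k => scal (A * r)%R (r ^ k)%R). intros; reflexivity.
    apply (@is_series_scal_l R_AbsRing R_NormedModule). apply is_series_geom. rewrite Rabs_pos_eq; lra. }
  assert (Hle : (A <= A * r * / (1 - r))%R).
  { rewrite HA at 1. rewrite <- (is_series_unique _ _ Hg). apply Series_le.
    - intros k. split. apply Rmult_le_pos. apply Cmod_ge_0. apply pow_le; lra.
      simpl pow. replace (A * r * r ^ k)%R with (A * (r * r ^ k))%R by ring.
      apply Rmult_le_compat_r. apply Rmult_le_pos; [lra|apply pow_le; lra].
      apply (coef_bound a F (S k) HH).
    - exists (A * r * / (1 - r))%R. auto. }
  pose proof (coef_bound a F 1 HH) as Hc1. rewrite H1, Cmod_1 in Hc1. fold A in Hc1.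
  assert (A * r * / (1 - r) * (1 - r) = A * r)%R by (field; lra).
  assert (A * (1 - r) <= A * r)%R by (apply (Rmult_le_compat_r (1 - r)) in Hle; lra).
  nra.
Qed.

Lemma cusp0_false (a : nat -> C) : is_cusp_form 0 a -> a 1%nat = 1 -> False.
Proof.
  intros [H0 [F [HS HM]]] H1. apply (cusp_hyp_false a F); auto. split; auto.
  intros tau Ht. rewrite HM by auto. apply Cmult_1_l.
Qed.

Theorem proposition2p1 (k nu : nat) (a : nat -> C) :
  Nat.Even k ->
  is_cusp_form k a ->
  is_hecke_eigenform k a ->
  a 1%nat = 1 ->
  forall n : nat,
    RtoC (INR (fact (k + 2 * nu - 1)) / INR (fact (k + nu - 1)))
      * shimura1 (k + 2 * nu) (rc_bracket (1 / 2) (INR k) nu theta_coef (dilate4 a)) n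
    = rc_bracket (INR k) (INR k) (2 * nu) a a n.
Proof.
  intros Hev Hcf He H1 n.
  destruct (Nat.eq_dec k 0) as [->|Hk].
  - exfalso. exact (cusp0_false a Hcf H1).
  - apply main_pos; auto. lia. destruct Hcf as [H0 _]. exact H0.
Qed.
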